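(* Let $d>0$, let $\mathcal{S}$ be the 4-PAM constellation labeled by any Gray labeling $\Phi_{\mathcal{S}}$, and let $\mathcal{B}\subset\{0,1\}^{2N}$ be any binary linear code with at least two codewords. Then $\mathsf{L}(\mathcal{B})\le 1.25$ dB. Moreover, there exist a Gray labeling and a binary linear code $\mathcal{B}$ for which this bound is attained, i.e., $\mathsf{L}(\mathcal{B})=20\log_{10}(2/\sqrt{3})\approx 1.25$ dB.
   Context: $\mathcal{S}=\{s_1,s_2,s_3,s_4\}$ with $s_1=-3d$, $s_2=-d$, $s_3=d$, $s_4=3d$. A labeling is a bijection $\Phi_{\mathcal{S}}:\{0,1\}^2\to\mathcal{S}$, described by $\boldsymbol{q}=[q_1,\dots,q_4]$ where $q_i$ is the integer whose two-bit representation (most significant bit first) is $\Phi_{\mathcal{S}}^{-1}(s_i)$; the Gray labelings are $[0,1,3,2]$, $[0,2,3,1]$, $[1,0,2,3]$, $[2,0,1,3]$. A codeword of $\mathcal{B}$ is written $\boldsymbol{b}=[\boldsymbol{b}[1],\dots,\boldsymbol{b}[N]]$ with $\boldsymbol{b}[k]=[b_1[k],b_2[k]]$, and the CM code is $\mathcal{X}=\{[\Phi_{\mathcal{S}}(\boldsymbol{b}[1]),\dots,\Phi_{\mathcal{S}}(\boldsymbol{b}[N])]:\boldsymbol{b}\in\mathcal{B}\}$. For $\boldsymbol{x},\hat{\boldsymbol{x}}\in\mathcal{S}^N$ and each $k$ with $x[k]\neq\hat{x}[k]$: $\mu^{\mathcal{X}}_k=\sigma^{2,\mathcal{X}}_k=(x[k]-\hat{x}[k])^2/(4d^2)$;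 $\mu^{\mathcal{B}}_k=\sigma^{2,\mathcal{B}}_k=(x[k]-\hat{x}[k])^2/(4d^2)$ except that if $\{x[k],\hat{x}[k]\}=\{s_1,s_4\}$ then $\mu^{\mathcal{B}}_k=3$, $\sigma^{2,\mathcal{B}}_k=1$. Summing over $k$ with $x[k]\neq\hat{x}[k]$, $a^{\mathcal{X}}(\boldsymbol{x},\hat{\boldsymbol{x}})=\sum_k\mu^{\mathcal{X}}_k/\sqrt{\sum_k\sigma^{2,\mathcal{X}}_k}$ and $a^{\mathcal{B}}(\boldsymbol{x},\hat{\boldsymbol{x}})=\sum_k\mu^{\mathcal{B}}_k/\sqrt{\sum_k\sigma^{2,\mathcal{B}}_k}$ (normalized distances of the symbol-wise ML decoder and of the bit-wise max-log decoder under the zero-crossing approximation). The asymptotic loss of the code is $\mathsf{L}(\mathcal{B})=20\log_{10}\Big(\min_{\boldsymbol{x}\neq\hat{\boldsymbol{x}}\in\mathcal{X}}a^{\mathcal{X}}(\boldsymbol{x},\hat{\boldsymbol{x}})\big/\min_{\boldsymbol{x}\neq\hat{\boldsymbol{x}}\in\mathcal{X}}a^{\mathcal{B}}(\boldsymbol{x},\hat{\boldsymbol{x}})\Big)$ dB. *)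

(* Defs.v *)
From HB Require Import structures.
From mathcomp Require Import all_boot all_order all_algebra.
From mathcomp Require Import all_classical all_reals all_analysis.
Set Implicit Arguments. Unset Strict Implicit. Unset Printing Implicit Defensive.
Import Order.TTheory GRing.Theory Num.Theory.
Local Open Scope ring_scope.
Local Open Scope classical_set_scope.

(* 4-PAM constellation, 0-indexed: sym d i = s_(i+1), i.e. -3d, -d, d, 3d
   for i = 0,1,2,3. *)
Definition sym (R : realType) (d : R) (i : nat) : R := (2 * i%:R - 3) * d.

(* A labeling is described by q = [q_1;..;q_4] (a seq of naturals), where q_i
   is the integer whose 2-bit representation (MSB first) is Phi^{-1}(s_i).
   The Gray labelings are the four listed ones. *)
Definition gray_labelings : seq (seq nat) :=
  [:: [:: 0; 1; 3; 2]; [:: 0; 2; 3; 1]; [:: 1; 0; 2; 3]; [:: 2; 0; 1; 3]]%N.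
Definition gray (q : seq nat) : bool := q \in gray_labelings.

Definition Phi (R : realType) (d : R) (q : seq nat) (b1 b2 : 'F_2) : R :=
  sym d (index (2 * (b1 : nat) + (b2 : nat))%N q).

(* A binary codeword of length 2N is a row vector over F_2 of length N*2; its
   k-th bit pair b[k] = [b1[k], b2[k]] consists of the bits at positions
   2k and 2k+1 (0-indexed), i.e. entries (k,0),(k,1) of vec_mx b. *)
Definition bitword (N : nat) := 'rV['F_2]_(N * 2).

Definition linear_code (N : nat) (B : {set bitword N}) : bool :=
  (0 \in B) && [forall u in B, forall v in B, u + v \in B].

Definition modulate (R : realType) (d : R) (q : seq nat) (N : nat)
  (b : bitword N) : 'I_N -> R :=
  fun k => Phi d q (@vec_mx 'F_2 N 2 b k ord0) (@vec_mx 'F_2 N 2 b k 1).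

Definition CMcode (R : realType) (d : R) (q : seq nat) (N : nat)
  (B : {set bitword N}) : set ('I_N -> R) :=
  [set modulate d q b | b in [set b | b \in B]].

Definition sqd (R : realType) (d x y : R) : R := (x - y) ^+ 2 / (4 * d ^+ 2).

Definition is_s1s4 (R : realType) (d x y : R) : bool :=
  ((x == - (3 * d)) && (y == 3 * d)) || ((x == 3 * d) && (y == - (3 * d))).

Definition muB (R : realType) (d x y : R) : R :=
  if is_s1s4 d x y then 3 else sqd d x y.
Definition sigB (R : realType) (d x y : R) : R :=
  if is_s1s4 d x y then 1 else sqd d x y.

Definition aX (R : realType) (d : R) (N : nat) (x xh : 'I_N -> R) : R :=
  (\sum_(k < N | x k != xh k) sqd d (x k) (xh k))
  / Num.sqrt (\sum_(k < N | x k != xh k) sqd d (x k) (xh k)).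
Definition aB (R : realType) (d : R) (N : nat) (x xh : 'I_N -> R) : R :=
  (\sum_(k < N | x k != xh k) muB d (x k) (xh k))
  / Num.sqrt (\sum_(k < N | x k != xh k) sigB d (x k) (xh k)).

(* minimum over pairs of distinct codewords of X (finite nonempty set, so the
   infimum is the minimum) *)
Definition min_pairs (R : realType) (N : nat) (X : set ('I_N -> R))
  (a : ('I_N -> R) -> ('I_N -> R) -> R) : R :=
  inf [set r | exists x xh, [/\ X x, X xh, x <> xh & r = a x xh]].

Definition log10 (R : realType) (x : R) : R := ln x / ln 10.

Definition loss (R : realType) (d : R) (q : seq nat) (N : nat)
  (B : {set bitword N}) : R :=
  20 * log10 (min_pairs (CMcode d q B) (@aX R d N) / min_pairs (CMcode d q B) (@aB R d N)).

(* Main.v *)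
Require Import Defs.
From HB Require Import structures.
From mathcomp Require Import all_boot all_order all_algebra.
From mathcomp Require Import all_classical all_reals all_analysis.
From mathcomp Require Import ring lra.
Import Order.TTheory GRing.Theory Num.Theory.
Local Open Scope ring_scope.

Section S.
Variables (R : realType) (d : R).
Hypothesis hd : 0 < d.
Local Open Scope classical_set_scope.

Definition tt4 (x y : R) : R := if is_s1s4 d x y then 1 else 0.

Lemma sqd_split x y : sqd d x y = muB d x y + 6 * tt4 x y.
Proof.
rewrite /muB /tt4; case: ifP => h; last by rewrite mulr0 addr0.
rewrite /sqd; have d0 : d != 0 by rewrite gt_eqF.
case/orP: h => /andP[/eqP -> /eqP ->]; field; rewrite ?mulf_neq0 //; exact: pnatr_eq0.
Qed.

Lemma sig_split x y : sigB d x y = muB d x y - 2 * tt4 x y.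
Proof.
rewrite /muB /sigB /tt4; case: ifP => h; last by rewrite mulr0 subr0.
lra.
Qed.

Lemma sqd_gt0 x y : x != y -> 0 < sqd d x y.
Proof.
move=> h; rewrite /sqd divr_gt0 //.
  by rewrite exprn_even_gt0 // subr_eq0.
by rewrite mulr_gt0 // exprn_gt0.
Qed.

Lemma sig_gt0 x y : x != y -> 0 < sigB d x y.
Proof. by move=> h; rewrite /sigB; case: ifP => _ //; exact: sqd_gt0. Qed.

Lemma tt4_ge0 x y : 0 <= tt4 x y.
Proof. by rewrite /tt4; case: ifP. Qed.

Lemma pair_bound N (x xh : 'I_N -> R) : x <> xh ->
  aX d x xh * Num.sqrt 3 <= 2 * aB d x xh.
Proof.
move=> neq.
have [k0 hk0] : exists k, x k != xh k.
  apply/existsP; apply: contraT; rewrite negb_exists => /forallP h.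
  by exfalso; apply: neq; apply: funext => k; have := h k; rewrite negbK => /eqP.
have eA : \sum_(k < N | x k != xh k) sqd d (x k) (xh k) =
  \sum_(k < N | x k != xh k) muB d (x k) (xh k) + 6 * \sum_(k < N | x k != xh k) tt4 (x k) (xh k).
  by rewrite mulr_sumr -big_split /=; apply: eq_bigr => k _; rewrite sqd_split.
have eS : \sum_(k < N | x k != xh k) sigB d (x k) (xh k) =
  \sum_(k < N | x k != xh k) muB d (x k) (xh k) - 2 * \sum_(k < N | x k != xh k) tt4 (x k) (xh k).
  by rewrite mulr_sumr -sumrB /=; apply: eq_bigr => k _; rewrite sig_split.
have Sg0 : 0 < \sum_(k < N | x k != xh k) sigB d (x k) (xh k).
  rewrite (bigD1 k0) //=. apply: (lt_le_trans (sig_gt0 _ _ hk0)); rewrite lerDl.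
  by apply: sumr_ge0 => k /andP[h _]; exact: ltW (sig_gt0 _ _ h).
have T0 : 0 <= \sum_(k < N | x k != xh k) tt4 (x k) (xh k).
  by apply: sumr_ge0 => k _; exact: tt4_ge0.
rewrite /aX /aB eA eS in Sg0 *.
move: Sg0 T0.
set M := \sum_(k < N | _) muB _ _ _.
set T := \sum_(k < N | _) tt4 _ _.
move=> Sg0 T0.
have A0 : 0 < M + 6 * T by lra.
set sA := Num.sqrt (M + 6 * T).
set sS := Num.sqrt (M - 2 * T).
set s3 := Num.sqrt 3.
have sA0 : 0 < sA by rewrite sqrtr_gt0.
have sS0 : 0 < sS by rewrite sqrtr_gt0.
have s30 : 0 < s3 by rewrite sqrtr_gt0.
have sA2 : sA ^+ 2 = M + 6 * T by rewrite sqr_sqrtr // ltW.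
have sS2 : sS ^+ 2 = M - 2 * T by rewrite sqr_sqrtr // ltW.
have s32 : s3 ^+ 2 = 3 by rewrite sqr_sqrtr.
have -> : (M + 6 * T) / sA = sA.
  by rewrite -sA2 expr2 mulfK // gt_eqF.
rewrite mulrA ler_pdivlMr //.
have hP : (sA * s3 * sS) ^+ 2 <= (2 * M) ^+ 2.
  rewrite !exprMn sA2 sS2 s32; have := sqr_ge0 (M - 6 * T); nra.
have P0 : 0 <= sA * s3 * sS by rewrite !mulr_ge0 // ltW.
have M0 : 0 <= 2 * M by lra.
rewrite -(ler_pXn2r (n:=2)) // ?nnegrE //.
Qed.

Lemma aX_ge0 N (x xh : 'I_N -> R) : 0 <= aX d x xh.
Proof.
rewrite /aX divr_ge0 ?sqrtr_ge0 //; apply: sumr_ge0 => k _.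
by rewrite /sqd divr_ge0 // ?sqr_ge0 // mulr_ge0 // sqr_ge0.
Qed.

Lemma aB_ge0 N (x xh : 'I_N -> R) : 0 <= aB d x xh.
Proof.
rewrite /aB divr_ge0 ?sqrtr_ge0 //; apply: sumr_ge0 => k _.
rewrite /muB; case: ifP => _ //.
by rewrite /sqd divr_ge0 // ?sqr_ge0 // mulr_ge0 // sqr_ge0.
Qed.

Lemma s3_gt1 : 1 < 2 / Num.sqrt 3 :> R.
Proof.
have s30 : 0 < Num.sqrt 3 :> R by rewrite sqrtr_gt0.
rewrite ltr_pdivlMr // mul1r.
have s32 : Num.sqrt 3 ^+ 2 = 3 :> R by rewrite sqr_sqrtr.
nra.
Qed.

Lemma loss_le N (X : set ('I_N -> R)) :
  20 * log10 (min_pairs X (@aX R d N) / min_pairs X (@aB R d N))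
  <= 20 * log10 (2 / Num.sqrt 3).
Proof.
have s30 : 0 < Num.sqrt 3 :> R by rewrite sqrtr_gt0.
rewrite /log10 ler_pM2l // ler_pM2r; last by rewrite invr_gt0 ln_gt0 // ltr1n.
have c1 := s3_gt1.
set mX := min_pairs X _; set mB := min_pairs X _.
have [r0|r0] := leP (mX / mB) 0.
  by rewrite ln0 // ln_ge0 // ltW.
set EB := [set r | exists x xh, [/\ X x, X xh, x <> xh & r = aB d x xh]].
set EX := [set r | exists x xh, [/\ X x, X xh, x <> xh & r = aX d x xh]].
have mBE : mB = inf EB by [].
have mXE : mX = inf EX by [].
have [[r Er]|nE] := pselect (exists r, EB r); last first.
  have E0 : EB = set0.
    by apply/funext => r; apply/propext; split => // Er; apply: nE; exists r.
  by move: r0; rewrite mBE E0 inf0 invr0 mulr0 ltxx.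
case: Er => x0 [xh0 [X0 Xh0 n0 _]].
have lbX : lbound EX 0 by move=> _ [x [xh [_ _ _ ->]]]; exact: aX_ge0.
have lbB : lbound EB 0 by move=> _ [x [xh [_ _ _ ->]]]; exact: aB_ge0.
have neX : EX !=set0 by exists (aX d x0 xh0); exists x0, xh0.
have neB : EB !=set0 by exists (aB d x0 xh0); exists x0, xh0.
have mB0 : 0 <= mB by rewrite mBE; exact: lb_le_inf.
have key : mX * Num.sqrt 3 / 2 <= mB.
  rewrite mBE; apply: lb_le_inf => // _ [x [xh [Xx Xxh nx ->]]].
  have hx : mX <= aX d x xh.
    by rewrite mXE; apply: ge_inf; [exists 0 | exists x, xh].
  have := pair_bound _ _ _ nx.
  have s0 := ltW s30.
  rewrite ler_pdivrMr // => h.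
  rewrite [aB _ _ _ * 2]mulrC; apply: (le_trans _ h); by rewrite ler_pM2r.
have mBp : 0 < mB.
  rewrite lt_neqAle mB0 andbT; apply/eqP => e; move: r0.
  by rewrite -e invr0 mulr0 ltxx.
rewrite ler_ln ?posrE ?(lt_trans ltr01 c1) //.
rewrite ler_pdivrMr // mulrAC ler_pdivlMr //.
move: key; rewrite ler_pdivrMr //; lra.
Qed.
End S.

Definition M0 : 'M['F_2]_(4,2) :=
  \matrix_(k, j) if (k : nat) == 0%N then (if (j : nat) == 0%N then 1 else 0)
                 else (if (j : nat) == 1%N then 1 else 0).
Definition b0 : bitword 4 := mxvec M0.
Definition q0 : seq nat := [:: 0; 1; 3; 2]%N.

Lemma F2_0 : nat_of_ord (0 : 'F_2) = 0%N. Proof. by []. Qed.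
Lemma F2_1 : nat_of_ord (1 : 'F_2) = 1%N. Proof. by []. Qed.

Section S2.
Variables (R : realType) (d : R).
Hypothesis hd : 0 < d.

Lemma x0E k : modulate d q0 (0 : bitword 4) k = - (3 * d).
Proof.
rewrite /modulate linear0 !mxE /Phi F2_0 /= /sym; lra.
Qed.

Lemma x1E k : modulate d q0 b0 k = if (k : nat) == 0%N then 3 * d else - d.
Proof.
rewrite /modulate /b0 mxvecK !mxE /Phi.
case: k => [[|[|[|[|k]]]] hk] //=; rewrite ?F2_0 ?F2_1 /= /sym; lra.
Qed.

Lemma sqd_sym x y : sqd d x y = sqd d y x.
Proof. by rewrite /sqd -opprB sqrrN. Qed.

Lemma s1s4_sym x y : is_s1s4 d x y = is_s1s4 d y x.
Proof. by rewrite /is_s1s4; case: (x == - (3*d)); case: (y == 3*d); case: (x == 3*d); case: (y == - (3*d)). Qed.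

Lemma aX_sym N (x y : 'I_N -> R) : aX d x y = aX d y x.
Proof.
rewrite /aX; have -> : \sum_(k < N | x k != y k) sqd d (x k) (y k) =
   \sum_(k < N | y k != x k) sqd d (y k) (x k).
  by apply: eq_big => [k|k _]; [rewrite eq_sym | rewrite sqd_sym].
by [].
Qed.

Lemma aB_sym N (x y : 'I_N -> R) : aB d x y = aB d y x.
Proof.
rewrite /aB /muB /sigB.
have -> : \sum_(k < N | x k != y k) (if is_s1s4 d (x k) (y k) then 3 else sqd d (x k) (y k)) =
   \sum_(k < N | y k != x k) (if is_s1s4 d (y k) (x k) then 3 else sqd d (y k) (x k)).
  by apply: eq_big => [k|k _]; [rewrite eq_sym | rewrite s1s4_sym sqd_sym].
have -> : \sum_(k < N | x k != y k) (if is_s1s4 d (x k) (y k) then 1 else sqd d (x k) (y k)) =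
   \sum_(k < N | y k != x k) (if is_s1s4 d (y k) (x k) then 1 else sqd d (y k) (x k)).
  by apply: eq_big => [k|k _]; [rewrite eq_sym | rewrite s1s4_sym sqd_sym].
by [].
Qed.

Local Open Scope classical_set_scope.

Definition B0 : {set bitword 4} := [set 0; b0].

Lemma b0_neq0 : b0 != 0.
Proof.
apply/eqP => h; have := congr1 (fun m => vec_mx m ord0 ord0) h.
by rewrite /b0 mxvecK linear0 !mxE.
Qed.

Lemma x01_neq : modulate d q0 (0 : bitword 4) <> modulate d q0 b0.
Proof.
move=> h; have := congr1 (fun f => f ord0) h; rewrite /= x0E x1E /= => e; clear h.
have h3 : 0 < 3 * d by rewrite mulr_gt0.
by move: h3; rewrite -{1}e oppr_gt0 => h3; have := lt_trans h3 (mulr_gt0 (ltr0n _ 3) hd); rewrite ltxx.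
Qed.

Lemma pairs_eq (a : ('I_4 -> R) -> ('I_4 -> R) -> R) :
  (forall x y, a x y = a y x) ->
  [set r | exists x xh, [/\ CMcode d q0 B0 x, CMcode d q0 B0 xh, x <> xh & r = a x xh]]
  = [set a (modulate d q0 0) (modulate d q0 b0)].
Proof.
move=> asym; apply/funext => r; apply/propext; split; last first.
  move=> ->; exists (modulate d q0 0), (modulate d q0 b0); split => //.
  - by exists 0; rewrite //= in_set2 eqxx.
  - by exists b0; rewrite //= in_set2 eqxx orbT.
  - exact: x01_neq.
case=> x [xh [[c1 Hc1 <-] [c2 Hc2 <-] nx ->]].
move: nx Hc1 Hc2; rewrite /= !in_set2 => nx /orP[] /eqP c1E /orP[] /eqP c2E; subst c1 c2.
all: try by case: nx.
all: by rewrite // asym.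
Qed.

Lemma d3_neq : - (3 * d) != 3 * d.
Proof.
apply/eqP => e; have h3 : 0 < 3 * d by rewrite mulr_gt0.
by move: h3; rewrite -{1}e oppr_gt0 => h3; have := lt_trans h3 (mulr_gt0 (ltr0n _ 3) hd); rewrite ltxx.
Qed.

Lemma d1_neq : - (3 * d) != - d.
Proof.
apply/eqP => e; have : 3 * d = d by apply: oppr_inj.
move/eqP; rewrite -subr_eq0 -{2}[d]mul1r -mulrBl mulf_eq0 => /orP[].
  by rewrite (_ : 3 - 1 = 2 :> R) ?pnatr_eq0 //; lra.
by rewrite gt_eqF.
Qed.

Lemma d31_neq : 3 * d != d.
Proof. apply/eqP => e; move: d1_neq; by rewrite e eqxx. Qed.

Lemma neq_all k : modulate d q0 0 k != modulate d q0 b0 k.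
Proof. by rewrite x0E x1E; case: ifP => _; [exact: d3_neq | exact: d1_neq]. Qed.

Lemma sqd9 : sqd d (- (3 * d)) (3 * d) = 9.
Proof. rewrite /sqd; have d0 : d != 0 by rewrite gt_eqF. by field. Qed.

Lemma sqd1 : sqd d (- (3 * d)) (- d) = 1.
Proof. rewrite /sqd; have d0 : d != 0 by rewrite gt_eqF. by field. Qed.

Lemma s14a : is_s1s4 d (- (3 * d)) (3 * d).
Proof. by rewrite /is_s1s4 !eqxx. Qed.

Lemma s14b : is_s1s4 d (- (3 * d)) (- d) = false.
Proof.
rewrite /is_s1s4 eqxx /=; apply/negbTE; rewrite negb_or negb_and.
have h : - d < 3 * d by rewrite (@lt_trans _ _ 0) ?oppr_lt0 ?mulr_gt0.
by rewrite (lt_eqF h) d3_neq.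
Qed.

Lemma sum4 (F : 'I_4 -> R) :
  \sum_(k < 4 | modulate d q0 0 k != modulate d q0 b0 k) F k = \sum_(k < 4) F k.
Proof. by apply: eq_bigl => k; rewrite neq_all. Qed.

Lemma aX_val : aX d (modulate d q0 0) (modulate d q0 b0) = 12 / Num.sqrt 12.
Proof.
rewrite /aX sum4.
have -> : \sum_(k < 4) sqd d (modulate d q0 0 k) (modulate d q0 b0 k) =
          \sum_(k < 4) (if (k : nat) == 0%N then 9 else 1 : R).
  by apply: eq_bigr => k _; rewrite x0E x1E; case: ifP => _; rewrite ?sqd9 ?sqd1.
rewrite !big_ord_recr big_ord0 /=.
have -> : 0 + 9 + 1 + 1 + 1 = 12 :> R by lra.
by [].
Qed.

Lemma aB_val : aB d (modulate d q0 0) (modulate d q0 b0) = 6 / Num.sqrt 4.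
Proof.
rewrite /aB !sum4.
have -> : \sum_(k < 4) muB d (modulate d q0 0 k) (modulate d q0 b0 k) =
          \sum_(k < 4) (if (k : nat) == 0%N then 3 else 1 : R).
  by apply: eq_bigr => k _; rewrite x0E x1E /muB; case: (nat_of_ord k == 0%N); rewrite ?s14a ?s14b ?sqd1.
have -> : \sum_(k < 4) sigB d (modulate d q0 0 k) (modulate d q0 b0 k) =
          \sum_(k < 4) (1 : R).
  by apply: eq_bigr => k _; rewrite x0E x1E /sigB; case: (nat_of_ord k == 0%N); rewrite ?s14a ?s14b ?sqd1.
rewrite !big_ord_recr !big_ord0 /=.
have -> : 0 + 3 + 1 + 1 + 1 = 6 :> R by lra.
have -> : 0 + 1 + 1 + 1 + 1 = 4 :> R by lra.
by [].
Qed.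

Lemma loss_ex : loss d q0 B0 = 20 * log10 (2 / Num.sqrt 3).
Proof.
rewrite /loss /min_pairs (pairs_eq _ (@aX_sym 4)) (pairs_eq _ (@aB_sym 4)) !inf1 aX_val aB_val.
have s30 : 0 < Num.sqrt 3 :> R by rewrite sqrtr_gt0.
have e12 : Num.sqrt 12 = 2 * Num.sqrt 3 :> R.
  rewrite (_ : 12 = 2 ^+ 2 * 3 :> R); last by lra.
  by rewrite sqrtrM ?sqrtr_sqr ?ger0_norm // sqr_ge0.
have e4 : Num.sqrt 4 = 2 :> R.
  by rewrite (_ : 4 = 2 ^+ 2 :> R) ?sqrtr_sqr ?ger0_norm //; lra.
rewrite e12 e4; congr (_ * log10 _); field.
by rewrite gt_eqF.
Qed.
End S2.

Lemma b0b0 : b0 + b0 = 0.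
Proof.
apply/matrixP => i j; rewrite !mxE.
exact: (addrr_pchar2 (pchar_Fp (isT : prime 2))).
Qed.

Lemma lin_B0 : linear_code B0.
Proof.
rewrite /linear_code /B0 in_set2 eqxx /=.
apply/forallP => u; apply/implyP; rewrite in_set2 => /orP[]/eqP->;
apply/forallP => v; apply/implyP; rewrite in_set2 => /orP[]/eqP->;
by rewrite ?add0r ?addr0 ?b0b0 in_set2 eqxx ?orbT.
Qed.

Lemma card_B0 : (1 < #|B0|)%N.
Proof. by rewrite /B0 cards2 eq_sym b0_neq0. Qed.

Theorem corollary1 (R : realType) (d : R) (hd : 0 < d) :
  (forall (q : seq nat) (N : nat) (B : {set bitword N}),
      gray q -> linear_code B -> (1 < #|B|)%N ->
      loss d q B <= 20 * log10 (2 / Num.sqrt 3))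
  /\
  (exists (q : seq nat) (N : nat) (B : {set bitword N}),
      [/\ gray q, linear_code B, (1 < #|B|)%N &
          loss d q B = 20 * log10 (2 / Num.sqrt 3)]).
Proof.
split.
  by move=> q N B _ _ _; rewrite /loss; exact: loss_le.
exists q0, 4%N, B0; split => //.
- exact: lin_B0.
- exact: card_B0.
- exact: loss_ex.
Qed.
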